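(* Every $(K_4-e)$-design $(X,\mathcal B)$ of order $10$ contains a subdesign of order $6$; that is, there exist a $6$-element subset $Y\subseteq X$ and a subcollection $\mathcal B'\subseteq\mathcal B$ such that $(Y,\mathcal B')$ is a $(K_4-e)$-design of order $6$.
   Context: $K_4-e$ is the graph on four vertices $a,b,c,d$ with edges $ab,ac,ad,bc,bd$; it is denoted $[a,b,c-d]$. A $(K_4-e)$-design of order $v$ is a pair $(X,\mathcal B)$ where $X$ is a set of $v$ vertices and $\mathcal B$ is a collection of copies of $K_4-e$ (called blocks) with vertices in $X$ whose edge sets partition the edge set of the complete graph $K_v$ on $X$. *)

(* Defs.v *)
From mathcomp Require Import all_boot.
Set Implicit Arguments. Unset Strict Implicit. Unset Printing Implicit Defensive.

(* A copy of K_4 - e, written [a,b,c-d], is given by its four vertices (a,b,c,d):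
   vertices a b c d, edges ab ac ad bc bd (cd is the missing edge). *)
Definition block (T : finType) := (T * T * T * T)%type.

Definition bverts (T : finType) (B : block T) : seq T :=
  let: (a, b, c, d) := B in [:: a; b; c; d].

Definition bedges (T : finType) (B : block T) : seq {set T} :=
  let: (a, b, c, d) := B in
  [:: [set a; b]; [set a; c]; [set a; d]; [set b; c]; [set b; d]].

Definition K4e_design (T : finType) (X : {set T}) (Bs : seq (block T)) : Prop :=
  (forall B, B \in Bs -> uniq (bverts B) /\ {subset bverts B <= X}) /\
  (forall x y, x \in X -> y \in X -> x != y ->
     count (fun B => [set x; y] \in bedges B) Bs = 1%N).

(* Main.v *)
Require Import Defs.
From mathcomp Require Import all_boot zify.
Set Implicit Arguments. Unset Strict Implicit. Unset Printing Implicit Defensive.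

Lemma count_sum (I : eqType) (a : pred I) (s : seq I) : count a s = \sum_(B <- s) a B.
Proof. by elim: s => [|B s IH]; rewrite ?big_nil ?big_cons //= IH. Qed.

Lemma sum_ind (T : finType) (A P : pred T) :
  \sum_(x | A x) (P x : nat) = #|[pred x | A x && P x]|.
Proof.
rewrite -sum1_card big_mkcondr /=; apply: eq_bigr => x _; by case: (P x).
Qed.

Lemma sum_eq1 (T : finType) (P : pred T) (z : T) : \sum_(w | P w) (z == w : nat) = P z.
Proof.
case Pz: (P z).
  rewrite (bigD1 z) //= eqxx big1 // => w /andP[_]; rewrite eq_sym => /negbTE ->//.
rewrite big1 // => w Pw; case: eqP => // E; by rewrite E Pw in Pz.
Qed.

Lemma set2_eqE (T : finType) (x y u v : T) : x != y ->
  ([set x; y] == [set u; v]) = ((x == u) && (y == v)) || ((x == v) && (y == u)).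
Proof.
move=> nxy; apply/eqP/idP.
  move=> E.
  have: x \in [set u; v] by rewrite -E set21.
  have: y \in [set u; v] by rewrite -E set22.
  have: u \in [set x; y] by rewrite E set21.
  have: v \in [set x; y] by rewrite E set22.
  rewrite !inE => /orP[]/eqP hv /orP[]/eqP hu /orP[]/eqP hy /orP[]/eqP hx;
  subst; rewrite ?eqxx ?orbT //; by rewrite eqxx in nxy.
by case/orP=> /andP[/eqP-> /eqP->] //; exact: setUC.
Qed.

Definition bigv (T : finType) (x : T) (B : block T) : bool :=
  let: (a, b, c, d) := B in (x == a) || (x == b).
Definition smallv (T : finType) (x : T) (B : block T) : bool :=
  let: (a, b, c, d) := B in (x == c) || (x == d).
Definition partner (T : finType) (x : T) (B : block T) : T :=
  let: (a, b, c, d) := B in if x == a then b else a.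
Definition nb (T : finType) (x : T) (B : block T) : seq T :=
  let: (a, b, c, d) := B in
  if x == a then [:: b; c; d] else if x == b then [:: a; c; d]
  else if (x == c) || (x == d) then [:: a; b] else [::].

Lemma sum_mem (T : finType) (X : {set T}) x (s : seq T) : uniq s -> {subset s <= X} ->
  x \notin s -> \sum_(y in X | y != x) (y \in s) = size s.
Proof.
move=> us sX xs; rewrite sum_ind -(card_uniqP us); apply: eq_card => y /=.
rewrite !inE; case ys: (y \in s); rewrite ?andbF // (sX _ ys) /=.
rewrite andbT; apply/eqP => E; by rewrite -E ys in xs.
Qed.

Lemma nb_mem (T : finType) (x y : T) (B : block T) : uniq (bverts B) -> x != y ->
  ([set x; y] \in bedges B) = (y \in nb x B).
Proof.
case: B => [[[a b] c] d] /=; rewrite !inE !negb_or => /and4P[/and3P[ab ac ad] /andP[bc bd] cd _] nxy.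
rewrite !set2_eqE //.
have ba : b != a by rewrite eq_sym.
have ca : c != a by rewrite eq_sym.
have da : d != a by rewrite eq_sym.
have cb : c != b by rewrite eq_sym.
have db : d != b by rewrite eq_sym.
have dc : d != c by rewrite eq_sym.
have nyx : (y == x) = false by rewrite eq_sym; apply/negbTE.
case: (eqVneq x a) => [?|xa]; first (subst x;
  rewrite ?eqxx ?(negbTE ab, negbTE ac, negbTE ad, negbTE ba, negbTE ca, negbTE da,
    negbTE bc, negbTE bd, negbTE cd, negbTE cb, negbTE db, negbTE dc) /= !inE ?nyx ?orbF ?andbF ?andbT //=;
  by case: (y == a); case: (y == b); case: (y == c); case: (y == d)).
case: (eqVneq x b) => [?|xb]; first (subst x;
  rewrite ?eqxx ?(negbTE ab, negbTE ac, negbTE ad, negbTE ba, negbTE ca, negbTE da,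
    negbTE bc, negbTE bd, negbTE cd, negbTE cb, negbTE db, negbTE dc) /= !inE ?nyx ?orbF ?andbF ?andbT //=;
  by case: (y == a); case: (y == b); case: (y == c); case: (y == d)).
case: (eqVneq x c) => [?|xc]; first (subst x;
  rewrite ?eqxx ?(negbTE ab, negbTE ac, negbTE ad, negbTE ba, negbTE ca, negbTE da,
    negbTE bc, negbTE bd, negbTE cd, negbTE cb, negbTE db, negbTE dc) /= !inE ?nyx ?orbF ?andbF ?andbT //=;
  by case: (y == a); case: (y == b); case: (y == c); case: (y == d)).
case: (eqVneq x d) => [?|xd]; first (subst x;
  rewrite ?eqxx ?(negbTE ab, negbTE ac, negbTE ad, negbTE ba, negbTE ca, negbTE da,
    negbTE bc, negbTE bd, negbTE cd, negbTE cb, negbTE db, negbTE dc) /= !inE ?nyx ?orbF ?andbF ?andbT //=;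
  by case: (y == a); case: (y == b); case: (y == c); case: (y == d)).
by rewrite ?(negbTE xa, negbTE xb, negbTE xc, negbTE xd) /= ?andbF.
Qed.

Lemma deg_block (T : finType) (X : {set T}) x (B : block T) : uniq (bverts B) ->
  {subset bverts B <= X} ->
  \sum_(y in X | y != x) ([set x; y] \in bedges B) = 3 * bigv x B + 2 * smallv x B.
Proof.
move=> uB sB.
rewrite (eq_bigr (fun y => nat_of_bool (y \in nb x B))); last by move=> y /andP[_ yx]; rewrite nb_mem // eq_sym.
move: uB sB; case: B => [[[a b] c] d] /=; rewrite !inE !negb_or => /and4P[/and3P[ab ac ad] /andP[bc bd] cd _] sB.
have ba : b != a by rewrite eq_sym.
have ca : c != a by rewrite eq_sym.
have da : d != a by rewrite eq_sym.
have cb : c != b by rewrite eq_sym.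
have db : d != b by rewrite eq_sym.
have dc : d != c by rewrite eq_sym.
have N := (negbTE ab, negbTE ac, negbTE ad, negbTE ba, negbTE ca, negbTE da,
    negbTE bc, negbTE bd, negbTE cd, negbTE cb, negbTE db, negbTE dc).
case: N => [[[[[[[[[[[n1 n2] n3] n4] n5] n6] n7] n8] n9] n10] n11] n12].
case: (eqVneq x a) => [?|xa]; first by subst x; (rewrite sum_mem //=; rewrite ?eqxx ?n1 ?n2 ?n3 ?n4 ?n5 ?n6 ?n7 ?n8 ?n9 ?n10 ?n11 ?n12 //=;
  try (by rewrite !inE ?eqxx ?n1 ?n2 ?n3 ?n4 ?n5 ?n6 ?n7 ?n8 ?n9 ?n10 ?n11 ?n12);
  move=> z zs; apply: sB; move: zs; rewrite !inE; 
        by do ![case/orP=> [/eqP->|]]; rewrite ?eqxx ?orbT // => /eqP->; rewrite eqxx ?orbT).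
case: (eqVneq x b) => [?|xb]; first by subst x; (rewrite sum_mem //=; rewrite ?eqxx ?n1 ?n2 ?n3 ?n4 ?n5 ?n6 ?n7 ?n8 ?n9 ?n10 ?n11 ?n12 //=;
  try (by rewrite !inE ?eqxx ?n1 ?n2 ?n3 ?n4 ?n5 ?n6 ?n7 ?n8 ?n9 ?n10 ?n11 ?n12);
  move=> z zs; apply: sB; move: zs; rewrite !inE; 
        by do ![case/orP=> [/eqP->|]]; rewrite ?eqxx ?orbT // => /eqP->; rewrite eqxx ?orbT).
case: (eqVneq x c) => [?|xc]; first by subst x; (rewrite sum_mem //=; rewrite ?eqxx ?n1 ?n2 ?n3 ?n4 ?n5 ?n6 ?n7 ?n8 ?n9 ?n10 ?n11 ?n12 //=;
  try (by rewrite !inE ?eqxx ?n1 ?n2 ?n3 ?n4 ?n5 ?n6 ?n7 ?n8 ?n9 ?n10 ?n11 ?n12);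
  move=> z zs; apply: sB; move: zs; rewrite !inE; 
        by do ![case/orP=> [/eqP->|]]; rewrite ?eqxx ?orbT // => /eqP->; rewrite eqxx ?orbT).
case: (eqVneq x d) => [?|xd]; first by subst x; (rewrite sum_mem //=; rewrite ?eqxx ?n1 ?n2 ?n3 ?n4 ?n5 ?n6 ?n7 ?n8 ?n9 ?n10 ?n11 ?n12 //=;
  try (by rewrite !inE ?eqxx ?n1 ?n2 ?n3 ?n4 ?n5 ?n6 ?n7 ?n8 ?n9 ?n10 ?n11 ?n12);
  move=> z zs; apply: sB; move: zs; rewrite !inE; 
        by do ![case/orP=> [/eqP->|]]; rewrite ?eqxx ?orbT // => /eqP->; rewrite eqxx ?orbT).
by rewrite ?(negbTE xa, negbTE xb, negbTE xc, negbTE xd) /= big1.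
Qed.

Lemma degree (T : finType) (X : {set T}) Bs x : K4e_design X Bs -> x \in X ->
  3 * count (bigv x) Bs + 2 * count (smallv x) Bs = #|X| - 1.
Proof.
move=> [H1 H2] xX.
have E : \sum_(y in X | y != x) count (fun B => [set x; y] \in bedges B) Bs = #|X| - 1.
  rewrite (eq_bigr (fun _ => 1)); last by move=> y /andP[yX yx]; apply: H2; rewrite // eq_sym.
  rewrite sum1_card (cardsD1 x X) xX.
  have -> : #|[pred y | (y \in X) && (y != x)]| = #|X :\ x|.
    by apply: eq_card => y; rewrite !inE andbC.
  lia.
rewrite -E.
under eq_bigr do rewrite count_sum.
rewrite exchange_big /= !count_sum !big_distrr /= -big_split /=.
apply: eq_big_seq => B BBs; have [u s] := H1 B BBs.
by rewrite deg_block.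
Qed.

Lemma sum_const2 (I : eqType) (s : seq I) : \sum_(B <- s) 2 = 2 * size s.
Proof. elim: s => [|B s IH]; rewrite ?big_nil ?big_cons //= IH; lia. Qed.

Lemma card_pair (T : finType) (X : {set T}) (a b : T) : a != b -> a \in X -> b \in X ->
  \sum_(x in X) ((x == a) || (x == b) : nat) = 2.
Proof.
move=> ab aX bX; rewrite sum_ind.
have -> : #|[pred x | (x \in X) && ((x == a) || (x == b))]| = #|[set a; b]|.
  apply: eq_card => x; rewrite !inE.
  by case: eqP => [->|]; case: eqP => [->|] //=; rewrite ?aX ?bX ?andbF.
by rewrite cards2 ab.
Qed.

Lemma sum_big (T : finType) (X : {set T}) Bs : K4e_design X Bs ->
  \sum_(x in X) count (bigv x) Bs = 2 * size Bs /\
  \sum_(x in X) count (smallv x) Bs = 2 * size Bs.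
Proof.
move=> [H1 _]; split; under eq_bigr do rewrite count_sum;
  rewrite exchange_big /= -sum_const2; apply: eq_big_seq => B BBs;
  have [u s] := H1 B BBs; move: u s; case: B BBs => [[[a b] c] d] _ /=;
  rewrite !inE !negb_or => /and4P[/and3P[ab ac ad] /andP[bc bd] cd _] sB;
  apply: card_pair => //; apply: sB; rewrite !inE eqxx ?orbT //.
Qed.

Lemma count_and_eq (I : eqType) (a r : pred I) s :
  count (fun B => a B && r B) s = count a s -> forall B, B \in s -> a B -> r B.
Proof.
elim: s => //= B0 s IH.
have le : count (fun B => a B && r B) s <= count a s by apply: sub_count => B /andP[].
move=> E B; rewrite inE => /orP[/eqP->|Bs] aB.
  rewrite aB in E; case rB: (r B0) => //; rewrite rB /= in E; lia.
apply: IH => //; move: E; case: (a B0); case: (r B0) => /=; lia.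
Qed.

Lemma count0 (I : eqType) (a : pred I) s : count a s = 0 -> forall B, B \in s -> a B = false.
Proof.
move=> /eqP; rewrite eqn0Ngt -has_count => /hasPn H B Bs; exact/negbTE/H.
Qed.

Lemma edge_big (T : finType) (x w : T) (B : block T) : uniq (bverts B) ->
  smallv x B = false -> smallv w B = false -> x != w ->
  ([set x; w] \in bedges B) = bigv x B && (partner x B == w).
Proof.
case: B => [[[a b] c] d] /=; rewrite !inE !negb_or => /and4P[/and3P[ab ac ad] /andP[bc bd] cd _].
move=> /norP[xc xd] /norP[wc wd] xw.
rewrite !set2_eqE // (negbTE xc) (negbTE xd) (negbTE wc) (negbTE wd) /= ?andbF ?orbF.
case: (eqVneq x a) => [?|xa]; first subst x.
  by rewrite (negbTE ab) /= orbF eq_sym.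
by case: (eqVneq x b) => //= _; rewrite eq_sym.
Qed.

Lemma partner_in (T : finType) (X W : {set T}) Bs x : K4e_design X Bs -> W \subset X ->
  (forall w, w \in W -> count (smallv w) Bs = 0) -> x \in W ->
  count (bigv x) Bs = #|W| - 1 ->
  forall B, B \in Bs -> bigv x B -> partner x B \in W.
Proof.
move=> [H1 H2] sWX HW xW Hc.
have E : \sum_(w in W | w != x) count (fun B => [set x; w] \in bedges B) Bs = #|W| - 1.
  rewrite (eq_bigr (fun _ => 1)); last first.
    by move=> y /andP[yW yx]; apply: H2; rewrite ?(subsetP sWX) // eq_sym.
  rewrite sum1_card (cardsD1 x W) xW.
  have -> : #|[pred y | (y \in W) && (y != x)]| = #|W :\ x|.
    by apply: eq_card => y; rewrite !inE andbC.
  lia.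
have E2 : \sum_(w in W | w != x) count (fun B => bigv x B && (partner x B == w)) Bs = #|W| - 1.
  rewrite -E; apply: eq_bigr => w /andP[wW wx]; apply: eq_in_count => B BBs /=.
  have [u _] := H1 B BBs.
  by rewrite edge_big // ?(count0 (HW _ wW)) ?(count0 (HW _ xW)) // eq_sym.
move: E2; under eq_bigr do rewrite count_sum.
rewrite exchange_big /= -Hc.
have -> : \sum_(B <- Bs) \sum_(w in W | w != x) (bigv x B && (partner x B == w) : nat)
   = count (fun B => bigv x B && ((partner x B \in W) && (partner x B != x))) Bs.
  rewrite count_sum; apply: eq_bigr => B _.
  case: (bigv x B) => /=; last by rewrite big1.
  by rewrite sum_eq1.
move=> E3 B BBs bB; by have /andP[] := count_and_eq E3 BBs bB.
Qed.

Theorem lemma2p2 (T : finType) (X : {set T}) (Bs : seq (block T)) :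
  #|X| = 10 -> K4e_design X Bs ->
  exists (Y : {set T}) (Bs' : seq (block T)),
    [/\ Y \subset X, #|Y| = 6, subseq Bs' Bs & K4e_design Y Bs'].
Proof.
move=> cX D; have [H1 H2] := D.
pose Y := [set x in X | count (smallv x) Bs != 0].
have pq x : x \in X -> count (bigv x) Bs + 2 * (x \in Y) = 3 /\ count (smallv x) Bs = 3 * (x \in Y).
  move=> xX; have := degree D xX; rewrite cX inE xX /=.
  case: eqP => h /=; lia.
have [Sb Ss] := sum_big D.
have sY : Y \subset X by apply/subsetP => y; rewrite inE => /andP[].
have hY : \sum_(x in X) (x \in Y : nat) = #|Y|.
  rewrite sum_ind; apply: eq_card => y; rewrite !inE.
  by case: (y \in X).
have cY : #|Y| = 6.
  have e1 : \sum_(x in X) (count (bigv x) Bs + 2 * (x \in Y)) = 30.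
    by rewrite (eq_bigr (fun _ => 3)) ?sum_nat_const ?cX // => x /pq[].
  have e2 : \sum_(x in X) count (smallv x) Bs = \sum_(x in X) 3 * (x \in Y).
    by apply: eq_bigr => x /pq[].
  rewrite big_split -big_distrr /= hY in e1; rewrite -big_distrr /= hY in e2.
  lia.
pose W := X :\: Y.
have cW : #|W| = 4.
  have := cardsID Y X; rewrite (setIidPr sY) cX cY; rewrite /W; lia.
have sW : W \subset X by apply: subsetDl.
have HW w : w \in W -> count (smallv w) Bs = 0.
  by move=> /setDP[wX]; rewrite inE wX /= negbK => /eqP.
have HWb w : w \in W -> count (bigv w) Bs = #|W| - 1.
  rewrite cW => wW; have := pq w (subsetP sW _ wW).
  move: wW; rewrite inE => /andP[/negbTE -> _]; lia.
have Hp w B : w \in W -> B \in Bs -> bigv w B -> partner w B \in W.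
  move=> wW; exact: (partner_in D sW HW wW (HWb _ wW)).
have YX y : y \in Y -> y \in X by move/(subsetP sY).
have WY y : y \in X -> y \notin Y -> y \in W by move=> yX yY; rewrite inE yX yY.
have smallY v B : B \in Bs -> v \in X -> smallv v B -> v \in Y.
  move=> BBs vX sv; rewrite inE vX /= -lt0n -has_count; apply/hasP; by exists B.
have key x y B : x \in Y -> y \in Y -> x != y -> B \in Bs -> [set x; y] \in bedges B ->
    all (fun v => v \in Y) (bverts B).
  move=> xY yY xy BBs.
  have [u sB] := H1 B BBs.
  move: BBs u sB; case: B => [[[a b] c] d] BBs /= _ sB.
  have aX : a \in X by apply: sB; rewrite !inE eqxx.
  have bX : b \in X by apply: sB; rewrite !inE eqxx ?orbT.
  have cX' : c \in X by apply: sB; rewrite !inE eqxx ?orbT.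
  have dX : d \in X by apply: sB; rewrite !inE eqxx ?orbT.
  have cY' : c \in Y by apply: (smallY c _ BBs) => //=; rewrite eqxx.
  have dY : d \in Y by apply: (smallY d _ BBs) => //=; rewrite eqxx orbT.
  have inxy u v : [set x; y] == [set u; v] -> u \in Y.
    move/eqP=> E; have : u \in [set x; y] by rewrite E set21.
    by case/set2P=> ->.
  move=> He.
  have abY : (a \in Y) || (b \in Y).
    rewrite !in_cons in_nil orbF in He.
    by case/orP: He => [/inxy|/orP[/inxy|/orP[/inxy|/orP[/inxy|/inxy]]]] ->; rewrite ?orbT.
  case aY: (a \in Y); case bY: (b \in Y); rewrite ?aY ?bY in abY => //=.
  - by rewrite cY' dY.
  - have := Hp b (a, b, c, d) (WY _ bX (negbT bY)) BBs; rewrite /bigv /partner /= eqxx orbT => /(_ isT).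
    case: eqP => [ba|_]; first by rewrite ba aY in bY.
    by rewrite inE aY.
  - have := Hp a (a, b, c, d) (WY _ aX (negbT aY)) BBs; rewrite /bigv /partner /= eqxx => /(_ isT).
    by rewrite inE bY.
exists Y, (filter (fun B => all (fun v => v \in Y) (bverts B)) Bs); split => //.
  exact: filter_subseq.
split.
  move=> B; rewrite mem_filter => /andP[/allP aB BBs]; split; first by have [] := H1 B BBs.
  exact: aB.
move=> x y xY yY xy; rewrite count_filter -(H2 x y (YX _ xY) (YX _ yY) xy).
apply: eq_in_count => B BBs /=; case e: ([set x; y] \in bedges B) => //=.
exact: (key x y B).
Qed.
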